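(* For non-zero integers $a,b$ let $f_{a,b}:(0,\infty)\to(0,\infty)$, $f_{a,b}(z)=z^{a/b}$ (real positive branch), and let $I\subseteq(0,\infty)$ have non-empty interior. Then there exist uncountably many $\zeta\in\mathscr{L}\cap I$ such that, for all non-zero integers $a,b$, $f_{a,b}(\zeta)\in\mathscr{L}$ holds if and only if $a/b\in\mathbb{Z}$. In particular, for any fixed coprime non-zero integers $a,b$ with $|b|\geq2$, the set $f_{a,b}(\mathscr{L}\cap(0,\infty))\cap\mathscr{L}$ is uncountable but $f_{a,b}(\mathscr{L}\cap(0,\infty))\not\subseteq\mathscr{L}$.
   Context: $\mathscr{L}$ is the set of Liouville numbers (real irrational $\zeta$ such that for every $\eta>0$ there are infinitely many rationals $y/x$, $x\geq1$, with $|\zeta-y/x|\leq x^{-\eta}$). *)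

(* Defs.v *)
From Stdlib Require Import Reals ZArith List.
Open Scope R_scope.

Definition irrational (z : R) : Prop :=
  ~ exists p q : Z, q <> 0%Z /\ z = IZR p / IZR q.

Definition infinite_set (S : R -> Prop) : Prop :=
  ~ exists l : list R, forall q, S q -> In q l.

Definition uncountable (S : R -> Prop) : Prop :=
  ~ exists f : nat -> R, forall x, S x -> exists n, f n = x.

Definition Liouville (z : R) : Prop :=
  irrational z /\
  forall eta : R, 0 < eta ->
    infinite_set (fun q => exists (x y : Z), (1 <= x)%Z /\ q = IZR y / IZR x /\
                     Rabs (z - q) <= Rpower (IZR x) (- eta)).

Definition fab (a b : Z) (z : R) : R := Rpower z (IZR a / IZR b).

Definition nonempty_interior (I : R -> Prop) : Prop :=
  exists c r : R, 0 < r /\ forall x, Rabs (x - c) < r -> I x.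

(* Main.v *)
Require Import Defs.
From Stdlib Require Import Reals ZArith List Lra Lia.
Open Scope R_scope.

Lemma Rpower_pos x s : 0 < Rpower x s.
Proof. unfold Rpower; apply exp_pos. Qed.

Lemma ln_le' x y : 0 < x -> x <= y -> ln x <= ln y.
Proof. intros h1 h2. destruct (Rle_lt_or_eq_dec _ _ h2) as [h|h]; [left; apply ln_increasing; auto| subst; lra]. Qed.

Lemma Rpower_bound_int t m M c : 0 < m -> m <= c <= M ->
  Rpower c t <= Rpower m t + Rpower M t.
Proof.
  intros Hm Hc. unfold Rpower.
  assert (H1: ln m <= ln c) by (apply ln_le'; lra).
  assert (H2: ln c <= ln M) by (apply ln_le'; lra).
  destruct (Rle_dec 0 t).
  - assert (t * ln c <= t * ln M) by (apply Rmult_le_compat_l; lra).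
    assert (exp (t * ln c) <= exp (t * ln M)).
    { destruct (Rle_lt_or_eq_dec _ _ H) as [h|h]; [left; apply exp_increasing; auto| rewrite h; lra]. }
    pose proof (exp_pos (t * ln m)); lra.
  - assert (t * ln c <= t * ln m) by nra.
    assert (exp (t * ln c) <= exp (t * ln m)).
    { destruct (Rle_lt_or_eq_dec _ _ H) as [h|h]; [left; apply exp_increasing; auto| rewrite h; lra]. }
    pose proof (exp_pos (t * ln M)); lra.
Qed.

Lemma lipschitz s z : 0 < z -> exists L, 0 < L /\ forall x y, z/2 <= x <= 2*z -> z/2 <= y <= 2*z ->
  Rabs (Rpower x s - Rpower y s) <= L * Rabs (x - y).
Proof.
  intros Hz.
  exists (Rabs s * (Rpower (z/2) (s-1) + Rpower (2*z) (s-1)) + 1).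
  split. { pose proof (Rabs_pos s); pose proof (Rpower_pos (z/2) (s-1)); pose proof (Rpower_pos (2*z) (s-1)); nra. }
  intros x y Hx Hy.
  destruct (MVT_abs (fun t => Rpower t s) (fun t => s * Rpower t (s-1)) y x) as [c [Hc1 Hc2]].
  { intros c Hc. apply derivable_pt_lim_power.
    assert (Rmin y x > 0) by (apply Rmin_glb_lt; lra). lra. }
  rewrite Hc1.
  assert (Hcb: z/2 <= c <= 2*z).
  { split. - apply Rle_trans with (Rmin y x); [apply Rmin_glb; lra| lra].
           - apply Rle_trans with (Rmax y x); [lra| apply Rmax_lub; lra]. }
  rewrite Rabs_mult. rewrite (Rabs_pos_eq (Rpower c _)) by (left; apply Rpower_pos).
  rewrite <- Rabs_Ropp with (x - y). replace (-(x-y)) with (y - x) by ring.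
  pose proof (Rpower_bound_int (s-1) (z/2) (2*z) c ltac:(lra) Hcb).
  pose proof (Rabs_pos s). pose proof (Rabs_pos (x - y)).
  rewrite <- Rabs_Ropp with (y - x). replace (-(y-x)) with (x - y) by ring.
  pose proof (Rpower_pos c (s-1)).
  assert (Rabs s * Rpower c (s - 1) <= Rabs s * (Rpower (z / 2) (s - 1) + Rpower (2 * z) (s - 1)) + 1) by nra.
  nra.
Qed.

Lemma inf_inj (P : R -> Prop) (g : nat -> R) :
  (forall n m, g n = g m -> n = m) -> (forall n, P (g n)) -> infinite_set P.
Proof.
  intros Hinj HS [l Hl].
  assert (HN: NoDup (map g (seq 0 (S (length l))))).
  { apply NoDup_map_NoDup_ForallPairs. - intros a b _ _ h; apply Hinj; auto. - apply seq_NoDup. }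
  assert (Hi: incl (map g (seq 0 (S (length l)))) l).
  { intros x Hx. apply in_map_iff in Hx. destruct Hx as [n [<- _]]. apply Hl, HS. }
  pose proof (NoDup_incl_length HN Hi). rewrite length_map, length_seq in H. lia.
Qed.

Lemma Rpower_inj x y s : 0 < x -> 0 < y -> s <> 0 -> Rpower x s = Rpower y s -> x = y.
Proof.
  intros hx hy hs h.
  assert (Rpower (Rpower x s) (/s) = Rpower (Rpower y s) (/s)) by (rewrite h; auto).
  rewrite !Rpower_mult, Rinv_r, !Rpower_1 in H; auto.
Qed.

Lemma gap (A B C D : Z) : (0 < B)%Z -> (0 < D)%Z -> IZR A / IZR B <> IZR C / IZR D ->
  1 / (IZR B * IZR D) <= Rabs (IZR A / IZR B - IZR C / IZR D).
Proof.
  intros hB hD hne.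
  apply IZR_lt in hB; apply IZR_lt in hD.
  assert (E: IZR A / IZR B - IZR C / IZR D = IZR (A * D - C * B) / (IZR B * IZR D)).
  { rewrite minus_IZR, !mult_IZR. field. lra. }
  rewrite E.
  assert (hz: (A * D - C * B)%Z <> 0%Z).
  { intro h. apply hne. assert (IZR (A*D - C*B) = 0) by (rewrite h; auto).
    rewrite minus_IZR, !mult_IZR in H.
    apply Rmult_eq_reg_r with (IZR B * IZR D); [|nra].
    unfold Rdiv. replace (IZR A * / IZR B * (IZR B * IZR D)) with (IZR A * IZR D) by (field; lra).
    replace (IZR C * / IZR D * (IZR B * IZR D)) with (IZR C * IZR B) by (field; lra). lra. }
  assert (1 <= Rabs (IZR (A * D - C * B))).
  { rewrite Rabs_Zabs. apply IZR_le. lia. }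
  unfold Rdiv. rewrite Rabs_mult, Rabs_inv, (Rabs_pos_eq (IZR B * IZR D)) by nra.
  apply Rmult_le_compat_r; [left; apply Rinv_0_lt_compat; nra| lra].
Qed.
Open Scope Z_scope.

Lemma odd_pow_nat o n : Z.odd o = true -> Z.odd (o ^ Z.of_nat n) = true.
Proof. intros h. destruct n. simpl. auto. rewrite Z.odd_pow; auto; lia. Qed.

Lemma two_adic_aux : forall m z, (Z.abs_nat z <= m)%nat -> z <> 0 ->
  exists i o, z = 2 ^ Z.of_nat i * o /\ Z.odd o = true.
Proof.
  induction m; intros z hz hnz.
  - lia.
  - destruct (Z.odd z) eqn:E.
    + exists 0%nat, z. split; [rewrite Z.mul_1_l; reflexivity | auto].
    + pose proof (Z.div2_odd z) as D. rewrite E in D. cbn [Z.b2z] in D. rewrite Z.add_0_r in D.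
      destruct (IHm (Z.div2 z)) as [i [o [h1 h2]]]; [lia|lia|].
      exists (S i), o. split; auto. rewrite Nat2Z.inj_succ, Z.pow_succ_r by lia. lia.
Qed.

Lemma two_adic z : z <> 0 -> exists i o, z = 2 ^ Z.of_nat i * o /\ Z.odd o = true.
Proof. intros; eapply two_adic_aux; eauto. Qed.

Lemma two_uniq : forall i j o o', Z.odd o = true -> Z.odd o' = true ->
  2 ^ Z.of_nat i * o = 2 ^ Z.of_nat j * o' -> i = j.
Proof.
  induction i; intros j o o' h h' E; destruct j; auto.
  - rewrite Nat2Z.inj_succ, Z.pow_succ_r in E by lia.
    assert (Z.odd o = Z.odd (2 * (2 ^ Z.of_nat j * o'))) by (f_equal; lia).
    rewrite Z.odd_mul in H. simpl in H. congruence.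
  - rewrite Nat2Z.inj_succ, Z.pow_succ_r in E by lia.
    assert (Z.odd o' = Z.odd (2 * (2 ^ Z.of_nat i * o))) by (f_equal; lia).
    rewrite Z.odd_mul in H. simpl in H. congruence.
  - rewrite !Nat2Z.inj_succ, !Z.pow_succ_r in E by lia.
    f_equal. apply (IHi j o o'); auto. lia.
Qed.

Lemma pow_decomp i o B : (2 ^ Z.of_nat i * o) ^ Z.of_nat B = 2 ^ Z.of_nat (i * B) * o ^ Z.of_nat B.
Proof. rewrite Z.pow_mul_l, Nat2Z.inj_mul, Z.pow_mul_r by lia. auto. Qed.

Lemma parity_key (A B : nat) (u v p q : Z) : (0 < B)%nat -> u <> 0 -> v <> 0 ->
  Z.odd p = true -> Z.odd q = true ->
  (u ^ Z.of_nat B * (2 * q) ^ Z.of_nat A = p ^ Z.of_nat A * v ^ Z.of_nat B \/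
   u ^ Z.of_nat B * p ^ Z.of_nat A = (2 * q) ^ Z.of_nat A * v ^ Z.of_nat B) ->
  Nat.divide B A.
Proof.
  intros hB hu hv hp hq H.
  destruct (two_adic u hu) as [i [o [-> ho]]].
  destruct (two_adic v hv) as [j [o' [-> ho']]].
  rewrite !pow_decomp in H.
  assert (Eq2 : (2 * q) ^ Z.of_nat A = 2 ^ Z.of_nat A * q ^ Z.of_nat A) by (rewrite Z.pow_mul_l; auto).
  rewrite Eq2 in H.
  pose proof (odd_pow_nat _ B ho). pose proof (odd_pow_nat _ B ho').
  pose proof (odd_pow_nat _ A hp). pose proof (odd_pow_nat _ A hq).
  destruct H as [H|H].
  - assert (E: 2 ^ Z.of_nat (i * B + A) * (o ^ Z.of_nat B * q ^ Z.of_nat A) =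
               2 ^ Z.of_nat (j * B) * (p ^ Z.of_nat A * o' ^ Z.of_nat B)).
    { rewrite Nat2Z.inj_add, Z.pow_add_r by lia. transitivity (2 ^ Z.of_nat (i * B) * o ^ Z.of_nat B * (2 ^ Z.of_nat A * q ^ Z.of_nat A)); [ring|]. rewrite H. ring. }
    apply two_uniq in E; [| rewrite Z.odd_mul, H0, H3; auto | rewrite Z.odd_mul, H2, H1; auto].
    exists (j - i)%nat. rewrite Nat.mul_sub_distr_r. lia.
  - assert (E: 2 ^ Z.of_nat (i * B) * (o ^ Z.of_nat B * p ^ Z.of_nat A) =
               2 ^ Z.of_nat (A + j * B) * (q ^ Z.of_nat A * o' ^ Z.of_nat B)).
    { rewrite Nat2Z.inj_add, Z.pow_add_r by lia. transitivity (2 ^ Z.of_nat (i * B) * o ^ Z.of_nat B * p ^ Z.of_nat A); [ring|]. rewrite H. ring. }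
    apply two_uniq in E; [| rewrite Z.odd_mul, H0, H2; auto | rewrite Z.odd_mul, H3, H1; auto].
    exists (i - j)%nat. rewrite Nat.mul_sub_distr_r. lia.
Qed.
Close Scope Z_scope. Open Scope R_scope.

Definition zrange (lo : Z) (len : nat) : list Z := map (fun i => (lo + Z.of_nat i)%Z) (seq 0 len).

Lemma in_zrange lo len z : (lo <= z < lo + Z.of_nat len)%Z -> In z (zrange lo len).
Proof.
  intros h. unfold zrange. apply in_map_iff. exists (Z.to_nat (z - lo)).
  split; [lia|]. apply in_seq. lia.
Qed.

Lemma Rpower_le1 x e : 1 <= x -> 0 <= e -> Rpower x (- e) <= 1.
Proof. intros. rewrite <- (Rpower_O x) by lra. apply Rle_Rpower; lra. Qed.

Lemma large_den y eta V : 0 < eta ->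
  infinite_set (fun q => exists (x yy : Z), (1 <= x)%Z /\ q = IZR yy / IZR x /\
                     Rabs (y - q) <= Rpower (IZR x) (- eta)) ->
  exists x yy : Z, (V < x)%Z /\ (1 <= x)%Z /\ Rabs (y - IZR yy / IZR x) <= Rpower (IZR x) (- eta).
Proof.
  intros he Hinf.
  destruct (Classical_Prop.classic (exists x yy : Z, (V < x)%Z /\ (1 <= x)%Z /\ Rabs (y - IZR yy / IZR x) <= Rpower (IZR x) (- eta))) as [h|h]; auto.
  exfalso. apply Hinf.
  set (Yb := up (IZR (Z.abs V) * (Rabs y + 1))).
  exists (flat_map (fun x => map (fun yy => IZR yy / IZR x) (zrange (- Yb) (Z.to_nat (2 * Yb + 1)))) (zrange 1 (Z.to_nat V))).
  intros q [x [yy [hx [-> hq]]]].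
  assert (xV: (x <= V)%Z).
  { destruct (Z.le_gt_cases x V); auto. exfalso; apply h. exists x, yy. auto. }
  apply in_flat_map. exists x. split. { apply in_zrange. lia. }
  apply in_map_iff. exists yy. split; auto.
  assert (hx1 : 1 <= IZR x) by (apply IZR_le; auto).
  pose proof (Rpower_le1 (IZR x) eta hx1 ltac:(lra)).
  assert (Rabs (IZR yy / IZR x) <= Rabs y + 1).
  { pose proof (Rabs_triang_inv (IZR yy / IZR x) y). rewrite Rabs_minus_sym in H0. lra. }
  assert (Rabs (IZR yy) <= IZR x * (Rabs y + 1)).
  { replace (IZR yy) with (IZR x * (IZR yy / IZR x)) by (field; lra).
    rewrite Rabs_mult, Rabs_pos_eq by lra. apply Rmult_le_compat_l; lra. }
  assert (IZR x <= IZR (Z.abs V)) by (apply IZR_le; lia).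
  destruct (archimed (IZR (Z.abs V) * (Rabs y + 1))) as [a1 a2]. fold Yb in a1, a2.
  pose proof (Rabs_pos y).
  assert (Rabs (IZR yy) < IZR Yb) by nra.
  rewrite Rabs_Zabs in H4. apply lt_IZR in H4.
  apply in_zrange. lia.
Qed.

Definition rpN (x y a : Z) : Z := if (0 <=? a)%Z then (x ^ Z.of_nat (Z.abs_nat a))%Z else (y ^ Z.of_nat (Z.abs_nat a))%Z.
Definition rpD (x y a : Z) : Z := if (0 <=? a)%Z then (y ^ Z.of_nat (Z.abs_nat a))%Z else (x ^ Z.of_nat (Z.abs_nat a))%Z.

Lemma rpD_pos x y a : (0 < x)%Z -> (0 < y)%Z -> (0 < rpD x y a)%Z.
Proof. intros; unfold rpD; destruct (0 <=? a)%Z; apply Z.pow_pos_nonneg; lia. Qed.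

Lemma div_pow x y n : y <> 0 -> (x / y) ^ n = x ^ n / y ^ n.
Proof. intros. unfold Rdiv. rewrite Rpow_mult_distr, pow_inv. auto. Qed.

Lemma rat_pow x y a : (0 < x)%Z -> (0 < y)%Z ->
  Rpower (IZR x / IZR y) (IZR a) = IZR (rpN x y a) / IZR (rpD x y a).
Proof.
  intros hx hy. apply IZR_lt in hx; apply IZR_lt in hy.
  assert (hxy: 0 < IZR x / IZR y) by (apply Rdiv_lt_0_compat; auto).
  unfold rpN, rpD. destruct (Z.leb_spec 0 a).
  - assert (IZR a = INR (Z.abs_nat a)).
    { rewrite INR_IZR_INZ, Zabs2Nat.id_abs, Z.abs_eq; auto. }
    rewrite H0, Rpower_pow by auto. rewrite <- !pow_IZR. apply div_pow. lra.
  - assert (IZR a = - INR (Z.abs_nat a)).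
    { rewrite INR_IZR_INZ, Zabs2Nat.id_abs, Z.abs_neq by lia. rewrite opp_IZR; ring. }
    rewrite H0, Rpower_Ropp, Rpower_pow by auto. rewrite <- !pow_IZR. rewrite div_pow by lra.
    field. split; apply pow_nonzero; lra.
Qed.

Lemma nat_large x : exists N, forall n, (N <= n)%nat -> x < INR n.
Proof.
  destruct (archimed x) as [h1 h2].
  exists (Z.to_nat (up x)). intros n hn.
  apply le_INR in hn.
  destruct (Z.leb_spec 0 (up x)).
  - rewrite INR_IZR_INZ, Z2Nat.id in hn by auto. lra.
  - apply IZR_lt in H. pose proof (pos_INR n). lra.
Qed.

Section Engine.
Variables (p Q : nat -> Z) (zeta : R).
Definition rr n := IZR (p n) / IZR (2 * Q n).
Hypothesis Hodd : forall n, Z.odd (p n) = true /\ Z.odd (Q n) = true.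
Hypothesis Hp : forall n, (0 < p n)%Z.
Hypothesis HQn : forall n, INR (S n) <= IZR (Q n).
Hypothesis HQmono : forall n, (Q n <= Q (S n))%Z.
Hypothesis Hgrow : forall (T : nat) (K : R), exists N, forall n, (N <= n)%nat -> K * IZR (Q n) ^ T <= IZR (Q (S n)).
Hypothesis Hlow : forall n, rr n < zeta.
Hypothesis Hup : forall n, zeta - rr n <= 4 / IZR (Q (S n)).
Hypothesis Hinc : forall n, rr n < rr (S n).

Lemma Q1 n : 1 <= IZR (Q n).
Proof. pose proof (HQn n). rewrite S_INR in H. pose proof (pos_INR n). lra. Qed.
Lemma QZ n : (1 <= Q n)%Z.
Proof. apply le_IZR, Q1. Qed.

Lemma rr_pos n : 0 < rr n.
Proof. unfold rr. pose proof (Hp n). pose proof (QZ n). apply Rdiv_lt_0_compat; apply IZR_lt; lia. Qed.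

Lemma zeta_pos : 0 < zeta.
Proof. pose proof (rr_pos 0); pose proof (Hlow 0); lra. Qed.

Lemma rr_mono n m : (n < m)%nat -> rr n < rr m.
Proof. induction 1. apply Hinc. pose proof (Hinc m); lra. Qed.

Lemma rr_inj n m : rr n = rr m -> n = m.
Proof. intros h. destruct (Nat.lt_trichotomy n m) as [H|[H|H]]; auto;
  apply rr_mono in H; lra. Qed.

Lemma E_fast T C : 0 <= C -> exists N, forall n, (N <= n)%nat ->
  C * IZR (Q n) ^ T * (zeta - rr n) < 1 /\ zeta - rr n <= zeta / 2.
Proof.
  intros hC. destruct (Hgrow T (4 * C + 1)) as [N1 H1].
  destruct (nat_large (8 / zeta)) as [N2 H2].
  pose proof zeta_pos as hz.
  exists (max N1 N2). intros n hn.
  specialize (H1 n ltac:(lia)). specialize (H2 (S n) ltac:(lia)).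
  pose proof (HQn (S n)). pose proof (Hup n). pose proof (Hlow n).
  set (Y := IZR (Q (S n))) in *. set (X := IZR (Q n) ^ T) in *.
  assert (hX: 1 <= X) by (apply pow_R1_Rle, Q1).
  assert (hY : 8 / zeta < Y). { rewrite S_INR in H. lra. }
  assert (hYp : 0 < Y) by (pose proof (Rdiv_lt_0_compat 8 zeta ltac:(lra) hz); lra).
  assert (hd: (zeta - rr n) * Y <= 4).
  { apply Rmult_le_reg_r with (/ Y). apply Rinv_0_lt_compat; auto.
    rewrite Rmult_assoc, Rinv_r by lra. lra. }
  split.
  - assert (hd0: 0 <= zeta - rr n) by lra.
    assert (C * (zeta - rr n) * ((4 * C + 1) * X) <= C * (zeta - rr n) * Y).
    { apply Rmult_le_compat_l; [apply Rmult_le_pos; lra| lra]. }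
    assert (C * (zeta - rr n) * Y <= C * 4).
    { rewrite Rmult_assoc. apply Rmult_le_compat_l; lra. }
    assert (C * X * (zeta - rr n) * (4 * C + 1) < 1 * (4 * C + 1)) by nra.
    apply Rmult_lt_reg_r in H6; lra.
  - assert (8 < zeta * Y).
    { apply Rmult_lt_compat_l with (r := zeta) in hY; auto. unfold Rdiv in hY.
      rewrite <- Rmult_assoc, Rinv_r_simpl_m in hY by lra. lra. }
    nra.
Qed.

Definition W := 2 * zeta + 2.

Lemma W_ge : 2 <= W.
Proof. unfold W; pose proof zeta_pos; lra. Qed.

Lemma approx_eq a n : Rpower (rr n) (IZR a) = IZR (rpN (p n) (2 * Q n) a) / IZR (rpD (p n) (2 * Q n) a).
Proof. unfold rr. apply rat_pow. apply Hp. pose proof (QZ n); lia. Qed.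

Lemma den_pos a n : (0 < rpD (p n) (2 * Q n) a)%Z.
Proof. apply rpD_pos. apply Hp. pose proof (QZ n); lia. Qed.

Lemma den_bound a n : IZR (rpD (p n) (2 * Q n) a) <= (W * IZR (Q n)) ^ Z.abs_nat a.
Proof.
  pose proof (Q1 n). pose proof W_ge.
  assert (hp: IZR (p n) <= W * IZR (Q n)).
  { pose proof (Hlow n). unfold rr in H1. rewrite mult_IZR in H1.
    apply Rmult_lt_compat_r with (r := 2 * IZR (Q n)) in H1; [|lra].
    unfold Rdiv in H1. rewrite Rmult_assoc, Rinv_l, Rmult_1_r in H1 by lra.
    unfold W. pose proof zeta_pos. nra. }
  unfold rpD. destruct (0 <=? a)%Z; rewrite <- pow_IZR; apply pow_incr.
  - rewrite mult_IZR. split; nra.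
  - pose proof (Hp n). apply IZR_lt in H1. split; lra.
Qed.

Lemma approx_lip k L : (forall x y, zeta/2 <= x <= 2*zeta -> zeta/2 <= y <= 2*zeta ->
  Rabs (Rpower x (IZR k) - Rpower y (IZR k)) <= L * Rabs (x - y)) ->
  forall n, zeta - rr n <= zeta / 2 ->
  Rabs (Rpower zeta (IZR k) - Rpower (rr n) (IZR k)) <= L * (zeta - rr n).
Proof.
  intros HL n hn. pose proof (Hlow n). pose proof zeta_pos.
  rewrite <- (Rabs_pos_eq (zeta - rr n)) by lra. apply HL; lra.
Qed.


Lemma int_pow_liouville k : k <> 0%Z -> Liouville (Rpower zeta (IZR k)).
Proof.
  intros hk. pose proof zeta_pos as hz.
  destruct (lipschitz (IZR k) zeta hz) as [L [hL HL]].
  pose proof (approx_lip k L HL) as HA.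
  set (A := Z.abs_nat k).
  assert (hkR : IZR k <> 0) by (apply not_0_IZR; auto).
  pose proof W_ge as hW.
  assert (Rne: forall n, Rpower (rr n) (IZR k) <> Rpower zeta (IZR k)).
  { intros n h. apply Rpower_inj in h; auto. pose proof (Hlow n); lra. apply rr_pos. }
  split.
  - intros [c [d [hd E]]].
    assert (exists c' d', (0 < d')%Z /\ Rpower zeta (IZR k) = IZR c' / IZR d') as [c' [d' [hd' E']]].
    { destruct (Z.lt_trichotomy d 0) as [h|[h|h]]; [|lia|].
      - exists (- c)%Z, (- d)%Z. split; [lia|]. rewrite E, !opp_IZR. field. apply not_0_IZR; auto.
      - exists c, d; auto. }
    clear E. apply IZR_lt in hd' as hdR.
    destruct (E_fast A (L * IZR d' * W ^ A)) as [N HN].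
    { apply Rmult_le_pos; [nra| apply pow_le; lra]. }
    destruct (HN N (le_n N)) as [h1 h2].
    pose proof (gap c' d' (rpN (p N) (2 * Q N) k) (rpD (p N) (2 * Q N) k) hd' (den_pos k N)) as G.
    rewrite <- E', <- approx_eq in G. specialize (G (fun e => Rne N (eq_sym e))).
    specialize (HA N h2).
    pose proof (den_bound k N) as DB. fold A in DB.
    pose proof (den_pos k N) as DP. apply IZR_lt in DP.
    set (D := IZR (rpD (p N) (2 * Q N) k)) in *.
    rewrite Rpow_mult_distr in DB.
    assert (1 <= IZR d' * D * (L * (zeta - rr N))).
    { assert (1 / (IZR d' * D) <= L * (zeta - rr N)) by lra.
      apply Rmult_le_compat_l with (r := IZR d' * D) in H; [|nra].
      replace (IZR d' * D * (1 / (IZR d' * D))) with 1 in H by (field; lra). lra. }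
    assert (IZR d' * D * (L * (zeta - rr N)) <= L * IZR d' * W ^ A * IZR (Q N) ^ A * (zeta - rr N)).
    { pose proof (Hlow N). 
      assert (0 <= L * IZR d' * (zeta - rr N)) by (apply Rmult_le_pos; nra).
      replace (IZR d' * D * (L * (zeta - rr N))) with (L * IZR d' * (zeta - rr N) * D) by ring.
      replace (L * IZR d' * W ^ A * IZR (Q N) ^ A * (zeta - rr N)) with (L * IZR d' * (zeta - rr N) * (W ^ A * IZR (Q N) ^ A)) by ring.
      apply Rmult_le_compat_l; auto. }
    lra.
  - intros eta heta.
    destruct (nat_large eta) as [M0 HM0].
    set (M := M0). assert (hM: eta < INR M) by (apply HM0; lia).
    destruct (E_fast (A * M) (L * W ^ (A * M))) as [N HN].
    { apply Rmult_le_pos; [lra| apply pow_le; lra]. }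
    apply (inf_inj _ (fun m => Rpower (rr (N + m)) (IZR k))).
    + intros i j h. apply Rpower_inj in h; try apply rr_pos; auto. apply rr_inj in h. lia.
    + intros m. set (n := (N + m)%nat).
      destruct (HN n ltac:(unfold n; lia)) as [h1 h2].
      exists (rpD (p n) (2 * Q n) k), (rpN (p n) (2 * Q n) k).
      pose proof (den_pos k n) as DP.
      split; [lia|]. split; [apply approx_eq|].
      specialize (HA n h2).
      pose proof (den_bound k n) as DB. fold A in DB.
      apply IZR_lt in DP. assert (D1: 1 <= IZR (rpD (p n) (2 * Q n) k)) by (apply IZR_le; apply lt_IZR in DP; lia).
      set (D := IZR (rpD (p n) (2 * Q n) k)) in *.
      rewrite Rpower_Ropp.
      assert (Rpower D eta <= D ^ M).
      { rewrite <- Rpower_pow by lra. apply Rle_Rpower; lra. }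
      assert (D ^ M <= W ^ (A * M) * IZR (Q n) ^ (A * M)).
      { rewrite <- Rpow_mult_distr, pow_mult. apply pow_incr. split; lra. }
      pose proof (Rpower_pos D eta).
      pose proof (Hlow n).
      assert (L * (zeta - rr n) * (W ^ (A * M) * IZR (Q n) ^ (A * M)) < 1) by lra.
      assert (L * (zeta - rr n) * Rpower D eta < 1).
      { apply Rle_lt_trans with (2 := H3). apply Rmult_le_compat_l; [nra|lra]. }
      apply Rle_trans with (1 := HA).
      apply Rmult_le_reg_r with (Rpower D eta); auto.
      rewrite Rinv_l by lra. lra.
Qed.

Lemma Q_mono_le n m : (n <= m)%nat -> (Q n <= Q m)%Z.
Proof. induction 1. lia. pose proof (HQmono m). lia. Qed.

Lemma find_n x : IZR (Q 0) <= x -> exists n, IZR (Q n) <= x < IZR (Q (S n)).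
Proof.
  intros h0.
  destruct (nat_large x) as [m Hm]. specialize (Hm m (le_n m)).
  assert (Hm': x < IZR (Q m)) by (pose proof (HQn m); rewrite S_INR in H; lra).
  clear Hm.
  induction m.
  - lra.
  - destruct (Rlt_dec x (IZR (Q m))) as [l|l].
    + apply IHm; auto.
    + exists m. lra.
Qed.

Lemma nonint a b : a <> 0%Z -> (0 < b)%Z -> ~ (exists k, IZR a / IZR b = IZR k) ->
  ~ Liouville (Rpower zeta (IZR a / IZR b)).
Proof.
  intros ha hb hnk [_ HL].
  pose proof zeta_pos as hz. pose proof W_ge as hW.
  set (y := Rpower zeta (IZR a / IZR b)).
  assert (hy : 0 < y) by apply Rpower_pos.
  set (B := Z.abs_nat b). set (A := Z.abs_nat a).
  assert (hB : (0 < B)%nat) by (unfold B; lia).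
  assert (hbR : IZR b = INR B).
  { unfold B. rewrite INR_IZR_INZ, Zabs2Nat.id_abs, Z.abs_eq; auto; lia. }
  assert (hbR0 : 0 < IZR b) by (apply IZR_lt; auto).
  assert (Key : Rpower y (IZR b) = Rpower zeta (IZR a)).
  { unfold y. rewrite Rpower_mult. f_equal. field. lra. }
  destruct (lipschitz (IZR b) y hy) as [L2 [hL2 HL2]].
  destruct (lipschitz (IZR a) zeta hz) as [L1 [hL1 HL1]].
  pose proof (approx_lip a L1 HL1) as HA1.
  destruct (Hgrow (2 * A) ((8 * L1 * W ^ A) ^ 2)) as [N0a H0a].
  destruct (E_fast 0 0 ltac:(lra)) as [N0b H0b].
  set (N0 := max N0a N0b).
  set (K := (B + 2 * B * A + 1)%nat).
  set (eta := INR K).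
  assert (heta1 : 1 <= eta).
  { unfold eta, K. rewrite <- INR_1. apply le_INR. lia. }
  set (V0 := Z.max (Q N0) (up (2 / y + 2 * L2 * W ^ A))).
  destruct (large_den y eta V0 ltac:(lra) (HL eta ltac:(lra))) as [v [u [hv1 [hv2 hv3]]]].
  assert (hvR : 1 <= IZR v) by (apply IZR_le; auto).
  set (Vr := IZR v) in *.
  assert (hVbig : 2 / y + 2 * L2 * W ^ A < Vr /\ IZR (Q N0) < Vr).
  { destruct (archimed (2 / y + 2 * L2 * W ^ A)) as [a1 _].
    assert (IZR (up (2 / y + 2 * L2 * W ^ A)) <= IZR V0) by (apply IZR_le; unfold V0; lia).
    assert (IZR (Q N0) <= IZR V0) by (apply IZR_le; unfold V0; lia).
    assert (IZR V0 < Vr) by (apply IZR_lt; auto). lra. }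
  destruct hVbig as [hV1 hV2].
  assert (hWA : 0 < W ^ A) by (apply pow_lt; lra).
  assert (hV2y : 2 / y < Vr) by (pose proof (Rmult_le_pos (2 * L2) (W ^ A)); nra).
  assert (hinv : Rpower Vr (- eta) <= / Vr).
  { rewrite <- (Rpower_1 Vr) at 2 by lra. rewrite <- Rpower_Ropp. apply Rle_Rpower; lra. }
  assert (hyV : / Vr <= y / 2).
  { apply Rmult_le_reg_r with Vr; [lra|]. rewrite Rinv_l by lra.
    assert (2 / y * y = 2) by (field; lra). nra. }
  set (uv := IZR u / Vr) in *.
  assert (huv : y / 2 <= uv <= 2 * y).
  { assert (Rabs (y - uv) <= y / 2) by lra.
    pose proof (Rle_abs (y - uv)); pose proof (Rle_abs (-(y - uv))); rewrite Rabs_Ropp in H1; lra. }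
  assert (hu : (0 < u)%Z).
  { apply lt_IZR. assert (IZR u = uv * Vr) by (unfold uv; field; lra). nra. }
  assert (hV2B : Vr <= Vr ^ (2 * B)).
  { rewrite <- (pow_1 Vr) at 1. apply Rle_pow; [lra|lia]. }
  assert (hQ0 : IZR (Q 0) <= Vr ^ (2 * B)).
  { pose proof (Q_mono_le 0 N0 ltac:(lia)). apply IZR_le in H. lra. }
  destruct (find_n _ hQ0) as [n [hn1 hn2]].
  assert (hnN : (N0 <= n)%nat).
  { destruct (Nat.le_gt_cases N0 n); auto. exfalso.
    pose proof (Q_mono_le (S n) N0 ltac:(lia)). apply IZR_le in H0. lra. }
  specialize (H0a n ltac:(unfold N0 in hnN; lia)).
  destruct (H0b n ltac:(unfold N0 in hnN; lia)) as [_ hclose].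
  specialize (HA1 n hclose).
  pose proof (Hlow n) as hlow. pose proof (Hup n) as hup.
  assert (EX : Rpower uv (IZR b) = IZR (rpN u v b) / IZR (rpD u v b)) by (apply rat_pow; lia).
  pose proof (approx_eq a n) as EY.
  destruct (Req_dec (Rpower uv (IZR b)) (Rpower (rr n) (IZR a))) as [Heq|Hne].
  -
    rewrite EX, EY in Heq.
    pose proof (rpD_pos u v b hu ltac:(lia)) as d1.
    pose proof (den_pos a n) as d2.
    assert (ZE : (rpN u v b * rpD (p n) (2 * Q n) a = rpN (p n) (2 * Q n) a * rpD u v b)%Z).
    { apply eq_IZR. rewrite !mult_IZR. apply IZR_lt in d1; apply IZR_lt in d2.
      apply Rmult_eq_reg_r with (/ (IZR (rpD u v b) * IZR (rpD (p n) (2 * Q n) a))).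
      2: { apply Rinv_neq_0_compat. nra. }
      replace (IZR (rpN u v b) * IZR (rpD (p n) (2 * Q n) a) * / (IZR (rpD u v b) * IZR (rpD (p n) (2 * Q n) a)))
        with (IZR (rpN u v b) / IZR (rpD u v b)) by (field; lra).
      rewrite Heq. field. lra. }
    unfold rpN, rpD in ZE. fold A B in ZE.
    destruct (Z.leb_spec 0 b); [|lia].
    destruct (Hodd n) as [op oq].
    assert (Hdiv : Nat.divide B A).
    { apply (parity_key A B u v (p n) (Q n)); auto; try lia.
      destruct (Z.leb_spec 0 a); [left|right]; lia. }
    destruct Hdiv as [c hc].
    apply hnk.
    destruct (Z.leb_spec 0 a).
    + exists (Z.of_nat c). apply Rmult_eq_reg_r with (IZR b); [|lra].
      unfold Rdiv. rewrite Rmult_assoc, Rinv_l, Rmult_1_r by lra.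
      rewrite <- mult_IZR. f_equal. unfold A, B in hc. lia.
    + exists (- Z.of_nat c)%Z. apply Rmult_eq_reg_r with (IZR b); [|lra].
      unfold Rdiv. rewrite Rmult_assoc, Rinv_l, Rmult_1_r by lra.
      rewrite <- mult_IZR. f_equal. unfold A, B in hc. lia.
  - pose proof (rpD_pos u v b hu ltac:(lia)) as d1.
    pose proof (den_pos a n) as d2.
    pose proof (gap (rpN u v b) _ (rpN (p n) (2 * Q n) a) _ d1 d2) as G. rewrite <- EX, <- EY in G. specialize (G Hne).
    assert (ED1 : IZR (rpD u v b) = Vr ^ B).
    { unfold rpD. destruct (Z.leb_spec 0 b); [|lia]. rewrite <- pow_IZR. auto. }
    rewrite ED1 in G.
    pose proof (den_bound a n) as DB. fold A in DB. rewrite Rpow_mult_distr in DB.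
    apply IZR_lt in d2.
    set (D := IZR (rpD (p n) (2 * Q n) a)) in *.
    set (P := Vr ^ B) in *.
    assert (hP : 1 <= P) by (apply pow_R1_Rle; lra).
    set (Qn := IZR (Q n)) in *. set (Qs := IZR (Q (S n))) in *.
    assert (hQn : 1 <= Qn) by apply Q1.
    assert (T1 : Rabs (Rpower uv (IZR b) - Rpower (rr n) (IZR a)) <=
                 L2 * Rpower Vr (- eta) + L1 * (zeta - rr n)).
    { replace (Rpower uv (IZR b) - Rpower (rr n) (IZR a)) with
        ((Rpower uv (IZR b) - Rpower y (IZR b)) + (Rpower zeta (IZR a) - Rpower (rr n) (IZR a))) by (rewrite Key; ring).
      apply Rle_trans with (1 := Rabs_triang _ _).
      apply Rplus_le_compat; auto.
      apply Rle_trans with (L2 * Rabs (uv - y)). apply HL2; lra.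
      apply Rmult_le_compat_l; [lra|]. rewrite Rabs_minus_sym. auto. }
    assert (hQnA : Qn ^ A <= Vr ^ (2 * B * A)).
    { rewrite pow_mult. apply pow_incr. split; lra. }
    assert (PD1 : P * D <= P * (W ^ A * Vr ^ (2 * B * A))).
    { apply Rmult_le_compat_l; [lra|]. apply Rle_trans with (1 := DB).
      apply Rmult_le_compat_l; lra. }
    assert (I1 : P * D * (L2 * Rpower Vr (- eta)) < / 2).
    { rewrite Rpower_Ropp. unfold eta. rewrite Rpower_pow by lra.
      assert (EK : Vr ^ K = P * Vr ^ (2 * B * A) * Vr).
      { unfold K, P. rewrite !pow_add. simpl. ring. }
      rewrite EK.
      assert (hVp : 0 < Vr ^ (2 * B * A)) by (apply pow_lt; lra).
      assert (2 * L2 * W ^ A < Vr) by (pose proof (Rdiv_lt_0_compat 2 y ltac:(lra) hy); lra).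
      assert (HPD : P * D * L2 <= P * (W ^ A * Vr ^ (2 * B * A)) * L2) by (apply Rmult_le_compat_r; lra).
      apply Rmult_lt_reg_r with (P * Vr ^ (2 * B * A) * Vr). { apply Rmult_lt_0_compat; [apply Rmult_lt_0_compat|]; lra. }
      replace (P * D * (L2 * / (P * Vr ^ (2 * B * A) * Vr)) * (P * Vr ^ (2 * B * A) * Vr)) with (P * D * L2) by (field; nra).
      assert (hZ : 0 < P * Vr ^ (2 * B * A)) by (apply Rmult_lt_0_compat; lra).
      assert (P * Vr ^ (2 * B * A) * (L2 * W ^ A) < P * Vr ^ (2 * B * A) * (Vr / 2)) by (apply Rmult_lt_compat_l; lra).
      replace (P * (W ^ A * Vr ^ (2 * B * A)) * L2) with (P * Vr ^ (2 * B * A) * (L2 * W ^ A)) in HPD by ring.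
      lra. }
    assert (I2 : P * D * (L1 * (zeta - rr n)) < / 2).
    { assert (hd : 0 <= zeta - rr n) by lra.
      assert (hQs : 0 < Qs) by lra.
      assert (hd4 : (zeta - rr n) * Qs <= 4).
      { apply Rmult_le_reg_r with (/ Qs). apply Rinv_0_lt_compat; auto.
        rewrite Rmult_assoc, Rinv_r by lra. unfold Rdiv in hup. lra. }
      set (X := 8 * L1 * W ^ A * Qn ^ A).
      assert (hX : 0 <= X) by (unfold X; pose proof (pow_le Qn A ltac:(lra)); apply Rmult_le_pos; nra).
      assert (hX2 : X * X <= Qs).
      { unfold X. replace (8 * L1 * W ^ A * Qn ^ A * (8 * L1 * W ^ A * Qn ^ A)) with ((8 * L1 * W ^ A) ^ 2 * Qn ^ (2 * A)).
        auto. replace (2 * A)%nat with (A + A)%nat by lia. rewrite pow_add. ring. }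
      assert (hP2 : P * P < Qs).
      { unfold P. replace (Vr ^ B * Vr ^ B) with (Vr ^ (2 * B)). lra. replace (2 * B)%nat with (B + B)%nat by lia. rewrite pow_add. ring. }
      assert (hPX : P * X < Qs).
      { destruct (Rlt_le_dec (P * X) Qs) as [l|l]; auto.
        assert (Qs * Qs <= (P * X) * (P * X)) by nra. nra. }
      assert (P * D <= P * (W ^ A * Qn ^ A)) by (apply Rmult_le_compat_l; lra).
      assert (P * D * (L1 * (zeta - rr n)) <= P * (W ^ A * Qn ^ A) * L1 * (zeta - rr n)).
      { replace (P * D * (L1 * (zeta - rr n))) with (P * D * (L1 * (zeta - rr n))) by ring.
        assert (0 <= L1 * (zeta - rr n)) by nra. nra. }
      assert (P * (W ^ A * Qn ^ A) * L1 * (zeta - rr n) * Qs * 8 <= P * X * 4).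
      { unfold X. assert (0 <= P * (W ^ A * Qn ^ A) * L1) by (pose proof (pow_le Qn A ltac:(lra)); apply Rmult_le_pos; [apply Rmult_le_pos|]; nra).
        nra. }
      assert (P * X * 4 < Qs * 4) by lra.
      assert (P * (W ^ A * Qn ^ A) * L1 * (zeta - rr n) * 8 < 4) by nra.
      lra. }
    assert (1 <= P * D * (L2 * Rpower Vr (- eta) + L1 * (zeta - rr n))).
    { assert (1 / (P * D) <= L2 * Rpower Vr (- eta) + L1 * (zeta - rr n)) by lra.
      apply Rmult_le_compat_l with (r := P * D) in H; [|nra].
      replace (P * D * (1 / (P * D))) with 1 in H by (field; nra). lra. }
    lra.
Qed.
End Engine.

Lemma engine_main p Q zeta :
  (forall n, Z.odd (p n) = true /\ Z.odd (Q n) = true) ->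
  (forall n, (0 < p n)%Z) ->
  (forall n, INR (S n) <= IZR (Q n)) ->
  (forall n, (Q n <= Q (S n))%Z) ->
  (forall (T : nat) (K : R), exists N, forall n, (N <= n)%nat -> K * IZR (Q n) ^ T <= IZR (Q (S n))) ->
  (forall n, rr p Q n < zeta) ->
  (forall n, zeta - rr p Q n <= 4 / IZR (Q (S n))) ->
  (forall n, rr p Q n < rr p Q (S n)) ->
  Liouville zeta /\ 0 < zeta /\ forall a b : Z, a <> 0%Z -> b <> 0%Z ->
         (Liouville (fab a b zeta) <-> exists k : Z, IZR a / IZR b = IZR k).
Proof.
  intros H1 H2 H3 H4 H5 H6 H7 H8.
  pose proof (zeta_pos p Q zeta H2 H3 H6) as hz.
  split; [|split; auto].
  { assert (h : Liouville (Rpower zeta (IZR 1))) by (eapply (int_pow_liouville p Q zeta); eauto; lia).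
    rewrite Rpower_1 in h; auto. }
  intros a b ha hb. unfold fab. split.
  - intros HL. destruct (Classical_Prop.classic (exists k : Z, IZR a / IZR b = IZR k)) as [h|h]; auto.
    exfalso. destruct (Z.lt_trichotomy b 0) as [hb'|[hb'|hb']]; [|lia|].
    + apply (nonint p Q zeta) with (a := (- a)%Z) (b := (- b)%Z); auto; try lia.
      * intros [k hk]. apply h. exists k. rewrite <- hk, !opp_IZR. field. apply not_0_IZR; auto.
      * rewrite !opp_IZR. replace (- IZR a / - IZR b) with (IZR a / IZR b) by (field; apply not_0_IZR; auto). auto.
    + apply (nonint p Q zeta) with (a := a) (b := b); auto.
  - intros [k hk]. rewrite hk. apply (int_pow_liouville p Q zeta); auto.
    intro e; subst. apply ha. apply eq_IZR.
    assert (IZR b <> 0) by (apply not_0_IZR; auto).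
    replace (IZR a) with (IZR a / IZR b * IZR b) by (field; auto). rewrite hk. ring.
Qed.

Lemma pow3_ge m : INR m <= 3 ^ m.
Proof.
  induction m. simpl; lra. rewrite S_INR. simpl. pose proof (pow_R1_Rle 3 m ltac:(lra)). lra.
Qed.

Section Construct.
Variables (c rad : R) (f : nat -> R).
Hypothesis Hrad : 0 < rad.
Hypothesis Hc : rad <= c.

Definition k0 : nat := S (Z.to_nat (up (10 / rad))).
Fixpoint kk n : nat := match n with 0 => k0 | S m => (S (S m) * kk m)%nat end.
Definition QQ n : Z := (3 ^ Z.of_nat (kk n))%Z.
Definition m0 : Z := (up (c * IZR (QQ 0)) - 1)%Z.
Fixpoint pp n : Z := match n with
 | 0 => (2 * m0 + 1)%Z
 | S m =>
     if Rle_dec (IZR (pp m) / IZR (2 * QQ m) + 1 / IZR (QQ (S m))) (f m) then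
       if Rle_dec (f m) (IZR (pp m) / IZR (2 * QQ m) + 1 / IZR (QQ (S m)) + 4 / IZR (QQ (S (S m))))
       then (pp m * 3 ^ Z.of_nat (kk (S m) - kk m) + 4)%Z
       else (pp m * 3 ^ Z.of_nat (kk (S m) - kk m) + 2)%Z
     else (pp m * 3 ^ Z.of_nat (kk (S m) - kk m) + 2)%Z
 end.

Lemma pp_S m : pp (S m) =
     if Rle_dec (IZR (pp m) / IZR (2 * QQ m) + 1 / IZR (QQ (S m))) (f m) then
       if Rle_dec (f m) (IZR (pp m) / IZR (2 * QQ m) + 1 / IZR (QQ (S m)) + 4 / IZR (QQ (S (S m))))
       then (pp m * 3 ^ Z.of_nat (kk (S m) - kk m) + 4)%Z
       else (pp m * 3 ^ Z.of_nat (kk (S m) - kk m) + 2)%Z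
     else (pp m * 3 ^ Z.of_nat (kk (S m) - kk m) + 2)%Z.
Proof. reflexivity. Qed.

Lemma kk_ge n : (S n <= kk n)%nat.
Proof. induction n; simpl. unfold k0; lia. nia. Qed.

Lemma kk_mono n : (kk n <= kk (S n))%nat.
Proof. simpl. nia. Qed.

Lemma QQ_R n : IZR (QQ n) = 3 ^ kk n.
Proof. unfold QQ. rewrite <- pow_IZR. auto. Qed.

Lemma QQ_S n : IZR (QQ (S n)) = IZR (QQ n) ^ (S (S n)).
Proof. rewrite !QQ_R. rewrite <- pow_mult. f_equal. simpl kk. lia. Qed.

Lemma QQ_ge n : INR (S n) <= IZR (QQ n).
Proof. rewrite QQ_R. eapply Rle_trans; [apply le_INR, kk_ge|apply pow3_ge]. Qed.

Lemma QQ_3 n : 3 <= IZR (QQ n).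
Proof. rewrite QQ_R. pose proof (kk_ge n). rewrite <- (pow_1 3) at 1. apply Rle_pow; [lra|lia]. Qed.

Lemma QQ_sq n : IZR (QQ n) ^ 2 <= IZR (QQ (S n)).
Proof. rewrite QQ_S. apply Rle_pow. pose proof (QQ_3 n); lra. lia. Qed.

Lemma QQ_9 n : 9 <= IZR (QQ (S n)).
Proof. pose proof (QQ_sq n). pose proof (QQ_3 n). nra. Qed.

Lemma QQ_split n : QQ (S n) = (QQ n * 3 ^ Z.of_nat (kk (S n) - kk n))%Z.
Proof. unfold QQ. rewrite <- Z.pow_add_r by lia. f_equal. pose proof (kk_mono n). lia. Qed.

Definition base n := rr pp QQ n + 1 / IZR (QQ (S n)).

Lemma step n :
  (rr pp QQ (S n) = base n /\ ~ (base n <= f n <= base n + 4 / IZR (QQ (S (S n))))) \/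
  (rr pp QQ (S n) = rr pp QQ n + 2 / IZR (QQ (S n)) /\ f n <= base n + 4 / IZR (QQ (S (S n)))).
Proof.
  pose proof (QQ_3 n) as h3. pose proof (QQ_3 (S n)) as h3'.
  assert (E : forall e, IZR ((pp n * 3 ^ Z.of_nat (kk (S n) - kk n) + e)) / IZR (2 * QQ (S n)) = rr pp QQ n + IZR e / 2 / IZR (QQ (S n))).
  { intros e. unfold rr. rewrite QQ_split, !mult_IZR, plus_IZR, mult_IZR.
    assert (0 < IZR (3 ^ Z.of_nat (kk (S n) - kk n))) by (apply IZR_lt, Z.pow_pos_nonneg; lia).
    field. lra. }
  unfold base. replace (rr pp QQ (S n)) with (IZR (pp (S n)) / IZR (2 * QQ (S n))) by reflexivity. rewrite pp_S.
  fold (rr pp QQ n).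
  destruct (Rle_dec (rr pp QQ n + 1 / IZR (QQ (S n))) (f n)) as [l1|l1].
  - destruct (Rle_dec (f n) (rr pp QQ n + 1 / IZR (QQ (S n)) + 4 / IZR (QQ (S (S n))))) as [l2|l2].
    + right. split; auto. rewrite E. f_equal. field. lra.
    + left. split. rewrite E. f_equal. field. lra. lra.
  - left. split. rewrite E. f_equal. field. lra. lra.
Qed.

Lemma QQ_odd n : Z.odd (QQ n) = true.
Proof. unfold QQ. apply odd_pow_nat. auto. Qed.

Lemma m0_nonneg : (0 <= m0)%Z.
Proof.
  unfold m0. pose proof (QQ_3 0%nat). destruct (archimed (c * IZR (QQ 0))) as [a1 _].
  assert (0 < IZR (up (c * IZR (QQ 0)))) by nra. apply lt_IZR in H0. lia.
Qed.

Lemma pp_pos_odd n : (0 < pp n)%Z /\ Z.odd (pp n) = true.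
Proof.
  induction n.
  - change (pp 0) with (2 * m0 + 1)%Z. pose proof m0_nonneg. split; [lia|]. rewrite Z.odd_add, Z.odd_mul. auto.
  - destruct IHn as [h1 h2]. rewrite pp_S.
    assert (0 < 3 ^ Z.of_nat (kk (S n) - kk n))%Z by (apply Z.pow_pos_nonneg; lia).
    assert (Z.odd (pp n * 3 ^ Z.of_nat (kk (S n) - kk n)) = true) by (rewrite Z.odd_mul, h2, odd_pow_nat; auto).
    destruct Rle_dec; [destruct Rle_dec|]; (split; [nia| rewrite Z.odd_add, H0; auto]).
Qed.

Lemma rr_step_le n : rr pp QQ n < rr pp QQ (S n) <= rr pp QQ n + 2 / IZR (QQ (S n)).
Proof.
  pose proof (QQ_3 (S n)). assert (0 < 1 / IZR (QQ (S n))) by (apply Rdiv_lt_0_compat; lra).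
  destruct (step n) as [[h _]|[h _]]; rewrite h; unfold base; split; try lra.
Qed.

Lemma tail n m : (n <= m)%nat -> rr pp QQ m <= rr pp QQ n + 4 / IZR (QQ (S n)) - 4 / IZR (QQ (S m)).
Proof.
  induction 1. lra.
  pose proof (rr_step_le m). pose proof (QQ_sq (S m)). pose proof (QQ_3 (S m)).
  assert (4 / IZR (QQ (S (S m))) <= 2 / IZR (QQ (S m))).
  { unfold Rdiv. apply Rmult_le_reg_r with (IZR (QQ (S (S m))) * IZR (QQ (S m))). nra.
    replace (4 * / IZR (QQ (S (S m))) * (IZR (QQ (S (S m))) * IZR (QQ (S m)))) with (4 * IZR (QQ (S m))) by (field; nra).
    replace (2 * / IZR (QQ (S m)) * (IZR (QQ (S (S m))) * IZR (QQ (S m)))) with (2 * IZR (QQ (S (S m)))) by (field; nra).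
    nra. }
  lra.
Qed.

Lemma construct : exists zeta, Liouville zeta /\ 0 < zeta /\
   (forall a b : Z, a <> 0%Z -> b <> 0%Z ->
         (Liouville (fab a b zeta) <-> exists k : Z, IZR a / IZR b = IZR k)) /\
   Rabs (zeta - c) < rad /\ forall n, zeta <> f n.
Proof.
  assert (Hgr : Un_growing (rr pp QQ)) by (intro n; left; apply rr_step_le).
  assert (Hub : has_ub (rr pp QQ)).
  { exists (rr pp QQ 0 + 4 / IZR (QQ 1)). intros x [m ->].
    pose proof (tail 0 m ltac:(lia)). pose proof (QQ_3 (S m)).
    assert (0 < 4 / IZR (QQ (S m))) by (apply Rdiv_lt_0_compat; lra). lra. }
  destruct (growing_cv _ Hgr Hub) as [zeta Hcv].
  assert (Hle : forall n, rr pp QQ n <= zeta) by (intro; apply growing_ineq; auto).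
  assert (Hlow : forall n, rr pp QQ n < zeta) by (intro n; pose proof (rr_step_le n); pose proof (Hle (S n)); lra).
  assert (Hup : forall n, zeta - rr pp QQ n <= 4 / IZR (QQ (S n))).
  { intros n. destruct (Rle_dec zeta (rr pp QQ n + 4 / IZR (QQ (S n)))) as [l|l]; [lra|exfalso].
    destruct (Hcv (zeta - (rr pp QQ n + 4 / IZR (QQ (S n))))) as [N HN]; [lra|].
    specialize (HN (max N n) ltac:(lia)). unfold Rdist in HN.
    pose proof (tail n (max N n) ltac:(lia)). pose proof (QQ_3 (S (max N n))).
    assert (0 < 4 / IZR (QQ (S (max N n)))) by (apply Rdiv_lt_0_compat; lra).
    pose proof (Hle (max N n)). rewrite Rabs_left1 in HN by lra. lra. }
  destruct (engine_main pp QQ zeta) as [L1 [L2 L3]].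
  - intro n. split. apply pp_pos_odd. apply QQ_odd.
  - intro n. apply pp_pos_odd.
  - apply QQ_ge.
  - intro n. unfold QQ. apply Z.pow_le_mono_r; [lia|]. pose proof (kk_mono n). lia.
  - intros T K. destruct (nat_large K) as [N HN]. exists (max N T). intros n hn.
    rewrite QQ_S. pose proof (QQ_3 n). pose proof (QQ_ge n). specialize (HN n ltac:(lia)).
    rewrite S_INR in H0.
    replace (S (S n)) with (T + (S (S n) - T))%nat by lia. rewrite pow_add.
    assert (IZR (QQ n) <= IZR (QQ n) ^ (S (S n) - T)) by (rewrite <- (pow_1 (IZR (QQ n))) at 1; apply Rle_pow; [lra|lia]).
    assert (0 < IZR (QQ n) ^ T) by (apply pow_lt; lra).
    rewrite Rmult_comm. apply Rmult_le_compat_l; lra.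
  - auto.
  - auto.
  - intro; apply rr_step_le.
  - exists zeta. split; auto. split; auto. split; auto. split.
    +
      pose proof (Hlow 0%nat) as h0. pose proof (Hup 0%nat) as h1.
      pose proof (QQ_3 0%nat) as q0. pose proof (QQ_sq 0%nat) as q1.
      assert (hk : 10 / rad < IZR (QQ 0)).
      { rewrite QQ_R. eapply Rlt_le_trans; [|apply pow3_ge]. change (kk 0%nat) with (S (Z.to_nat (up (10 / rad)))). rewrite S_INR.
        destruct (archimed (10 / rad)) as [a1 _].
        destruct (Z.leb_spec 0 (up (10 / rad))).
        - rewrite INR_IZR_INZ, Z2Nat.id by auto. lra.
        - apply IZR_lt in H. pose proof (pos_INR (Z.to_nat (up (10 / rad)))). lra. }
      assert (hk' : 10 < rad * IZR (QQ 0)).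
      { apply Rmult_lt_compat_l with (r := rad) in hk; auto. unfold Rdiv in hk.
        rewrite <- Rmult_assoc, Rinv_r_simpl_m in hk by lra. lra. }
      assert (h4 : 4 / IZR (QQ 1) <= 4 / IZR (QQ 0)).
      { unfold Rdiv. apply Rmult_le_compat_l; [lra|]. apply Rinv_le_contravar; nra. }
      destruct (archimed (c * IZR (QQ 0))) as [a1 a2].
      assert (hm0 : IZR m0 <= c * IZR (QQ 0) < IZR m0 + 1).
      { unfold m0. rewrite minus_IZR. lra. }
      assert (hr0 : rr pp QQ 0 = (IZR m0 + /2) / IZR (QQ 0)).
      { unfold rr. change (pp 0) with (2 * m0 + 1)%Z. rewrite plus_IZR, !mult_IZR. field. lra. }
      assert (Hc1 : Rabs (rr pp QQ 0 - c) <= / 2 / IZR (QQ 0)).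
      { rewrite hr0. replace ((IZR m0 + / 2) / IZR (QQ 0) - c) with ((IZR m0 + /2 - c * IZR (QQ 0)) / IZR (QQ 0)) by (field; lra).
        unfold Rdiv. rewrite Rabs_mult, (Rabs_pos_eq (/ IZR (QQ 0))) by (left; apply Rinv_0_lt_compat; lra).
        apply Rmult_le_compat_r; [left; apply Rinv_0_lt_compat; lra|]. apply Rabs_le. lra. }
      assert ((9/2) / IZR (QQ 0) < rad).
      { apply Rmult_lt_reg_r with (IZR (QQ 0)); [lra|]. unfold Rdiv. rewrite Rmult_assoc, Rinv_l by lra. lra. }
      replace (zeta - c) with ((zeta - rr pp QQ 0) + (rr pp QQ 0 - c)) by ring.
      apply Rle_lt_trans with (1 := Rabs_triang _ _).
      rewrite (Rabs_pos_eq (zeta - rr pp QQ 0)) by lra.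
      assert (/ 2 / IZR (QQ 0) + 4 / IZR (QQ 0) = (9/2) / IZR (QQ 0)) by (field; lra).
      lra.
    + intros n e.
      pose proof (Hlow (S n)) as h0. pose proof (Hup (S n)) as h1.
      pose proof (QQ_sq (S n)) as q1. pose proof (QQ_9 n) as q9.
      assert (hq : 4 / IZR (QQ (S (S n))) < 1 / IZR (QQ (S n))).
      { unfold Rdiv. apply Rmult_lt_reg_r with (IZR (QQ (S (S n))) * IZR (QQ (S n))). nra.
        replace (4 * / IZR (QQ (S (S n))) * (IZR (QQ (S (S n))) * IZR (QQ (S n)))) with (4 * IZR (QQ (S n))) by (field; nra).
        replace (1 * / IZR (QQ (S n)) * (IZR (QQ (S (S n))) * IZR (QQ (S n)))) with (IZR (QQ (S (S n)))) by (field; nra).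
        nra. }
      destruct (step n) as [[h hn]|[h hn]].
      * apply hn. rewrite <- e, <- h. lra.
      * unfold base in hn. rewrite h in h0.
        assert (1 / IZR (QQ (S n)) + 1 / IZR (QQ (S n)) = 2 / IZR (QQ (S n))) by (field; nra).
        lra.
Qed.

End Construct.

Theorem theorem6p2 :
  (forall I : R -> Prop,
     (forall x, I x -> 0 < x) ->
     nonempty_interior I ->
     uncountable (fun zeta =>
       Liouville zeta /\ I zeta /\
       forall a b : Z, a <> 0%Z -> b <> 0%Z ->
         (Liouville (fab a b zeta) <-> exists k : Z, IZR a / IZR b = IZR k)))
  /\
  (forall a b : Z, a <> 0%Z -> b <> 0%Z -> Z.gcd a b = 1%Z -> (2 <= Z.abs b)%Z ->
     uncountable (fun y => Liouville y /\
                    exists z, Liouville z /\ 0 < z /\ y = fab a b z)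
     /\
     ~ (forall z, Liouville z -> 0 < z -> Liouville (fab a b z))).
Proof.
  split.
  - intros I hpos [c0 [r0 [hr0 hI]]] [g Hg].
    assert (hc0 : 0 < c0) by (apply hpos, hI; rewrite Rminus_diag, Rabs_R0; auto).
    destruct (construct c0 (Rmin r0 c0) g) as [zeta [L1 [zp [L3 [Lb Lf]]]]].
    + apply Rmin_glb_lt; auto.
    + apply Rmin_r.
    + destruct (Hg zeta) as [n hn].
      * split; auto. split; auto. apply hI. pose proof (Rmin_l r0 c0). lra.
      * apply (Lf n); auto.
  - intros a b ha hb hg hb2.
    assert (Rb : IZR b <> 0) by (apply not_0_IZR; auto).
    assert (Ra : IZR a <> 0) by (apply not_0_IZR; auto).
    assert (fab1 : forall k z, fab k 1 z = Rpower z (IZR k)).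
    { intros k z. unfold fab. f_equal. field. }
    split.
    + intros [g Hg].
      destruct (construct 1 1 (fun n => Rpower (g n) (/ IZR a))) as [zeta [L1 [zp [L3 [Lb Lf]]]]]; try lra.
      assert (Ly : Liouville (Rpower zeta (IZR a))).
      { rewrite <- fab1. apply L3; auto; try lia. exists a. field. }
      assert (Lz : Liouville (Rpower zeta (IZR b))).
      { rewrite <- fab1. apply L3; auto; try lia. exists b. field. }
      destruct (Hg (Rpower zeta (IZR a))) as [n hn].
      * split; auto. exists (Rpower zeta (IZR b)). split; auto. split; [apply Rpower_pos|].
        unfold fab. rewrite Rpower_mult. f_equal. field; auto.
      * apply (Lf n). rewrite hn, Rpower_mult, Rinv_r, Rpower_1; auto.
    + intros H.
      destruct (construct 1 1 (fun _ => 0)) as [zeta [L1 [zp [L3 _]]]]; try lra.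
      specialize (H zeta L1 zp). apply L3 in H; auto.
      destruct H as [k hk].
      assert (ea : a = (k * b)%Z).
      { apply eq_IZR. rewrite mult_IZR, <- hk. field; auto. }
      assert (Z.divide b (Z.gcd a b)).
      { apply Z.gcd_greatest. exists k. auto. apply Z.divide_refl. }
      rewrite hg in H. apply Z.divide_1_r in H. lia.
Qed.
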